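(* Let $(K,\delta)$ be a differential field of characteristic zero. Then $(K,\delta)$ is regular if and only if every constant of $K$ (every $c\in K$ with $\delta(c)=0$) is stable in $(K,\delta)$. Moreover, if $(K,\delta)$ is regular, then an element $f\in K$ is stable in $(K,\delta)$ if and only if $\delta(f)$ is stable in $(K,\delta)$.
   Context: A differential field $(K,\delta)$ is a field with an additive map $\delta$ satisfying $\delta(fg)=f\delta(g)+g\delta(f)$. It is regular if there exists $x\in K$ with $\delta(x)=1$. An element $f\in K$ is stable in $(K,\delta)$ if there is a sequence $(a_i)_{i\ge0}$ in $K$ with $a_0=f$ and $\delta(a_{i+1})=a_i$ for all $i\in\mathbb{N}$. *)

(* Defs.v *)
From HB Require Import structures.
From mathcomp Require Import all_boot all_order all_algebra.
Set Implicit Arguments. Unset Strict Implicit. Unset Printing Implicit Defensive.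
Import GRing.Theory.
Local Open Scope ring_scope.

Definition is_derivation (K : fieldType) (d : {additive K -> K}) : Prop :=
  forall f g : K, d (f * g) = f * d g + g * d f.

Definition regular (K : fieldType) (d : {additive K -> K}) : Prop :=
  exists x : K, d x = 1.

Definition stable (K : fieldType) (d : {additive K -> K}) (f : K) : Prop :=
  exists a : nat -> K, a 0%N = f /\ forall i : nat, d (a i.+1) = a i.

(* Main.v *)
Require Import Defs.
From HB Require Import structures.
From mathcomp Require Import all_boot all_order all_algebra.
From mathcomp Require Import ring.
Local Open Scope ring_scope.
Import GRing.Theory.

Section Aux.
Variables (K : fieldType) (d : {additive K -> K}).
Hypothesis hd : is_derivation d.
Hypothesis hc : [pchar K] =i pred0.

Lemma d1 : d 1 = 0.
Proof.
have := hd 1 1; rewrite !mul1r => h.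
have : d 1 + d 1 - d 1 = d 1 - d 1 by rewrite -h.
by rewrite addrK subrr.
Qed.

Lemma dnat n : d n%:R = 0.
Proof. by rewrite raddfMn d1 mul0rn. Qed.

Lemma dinv k : d k = 0 -> d k^-1 = 0.
Proof.
case: (eqVneq k 0) => [->|nz dk]; first by rewrite invr0.
have := hd k k^-1; rewrite mulfV // d1 dk mulr0 addr0 => /esym/eqP.
by rewrite mulf_eq0 (negbTE nz) /= => /eqP.
Qed.

Lemma dconstmul c y : d c = 0 -> d (c * y) = c * d y.
Proof. by move=> h; rewrite hd h mulr0 addr0. Qed.

Lemma dpow x n : d (x ^+ n.+1) = n.+1%:R * x ^+ n * d x.
Proof.
elim: n => [|n IH]; first by rewrite expr1 expr0 mulr1 mul1r.
rewrite exprS hd IH exprS -[in RHS](addn1 n.+1) natrD; ring.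
Qed.

Lemma natnz n : (n.+1)%:R != 0 :> K.
Proof. by have /pcharf0P -> := hc. Qed.

Lemma factnz n : (n`!)%:R != 0 :> K.
Proof. by have /pcharf0P -> := hc; rewrite -lt0n fact_gt0. Qed.

Lemma reg_const x c : d x = 1 -> d c = 0 -> stable d c.
Proof.
move=> dx dc.
exists (fun i => (c / (i`!)%:R) * x ^+ i); split.
  by rewrite fact0 divr1 expr0 mulr1.
move=> i; rewrite dconstmul; last first.
  by rewrite hd (dinv _ (dnat _)) dc !mulr0 addr0.
rewrite dpow dx factS natrM.
have h1 := natnz i; have h2 := factnz i.
field; rewrite h2 /= addrC natr1 //.
Qed.

End Aux.

Theorem proposition2p8 (K : fieldType) (d : {additive K -> K}) :
  is_derivation d -> [pchar K] =i pred0 ->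
  (regular d <-> (forall c : K, d c = 0 -> stable d c)) /\
  (regular d -> forall f : K, stable d f <-> stable d (d f)).
Proof.
move=> hd hc; split.
  split.
    by case=> x dx c dc; exact: (@reg_const K d hd hc x c dx dc).
  move=> h; have [a [a0 ha]] := h 1 (@d1 K d hd).
  by exists (a 1%N); rewrite ha a0.
case=> x dx f; split.
  case=> a [a0 ha]; exists (fun i => if i is j.+1 then a j else d f); split => //.
  by case=> [|i] /=; [rewrite a0 | rewrite ha].
case=> b [b0 hb].
have dcst : d (f - b 1%N) = 0 by rewrite raddfB hb b0 subrr.
have [cs [cs0 hcs]] := @reg_const K d hd hc x _ dx dcst.
exists (fun i => if i is j.+1 then b j.+2 + cs j.+1 else f); split => //.
case=> [|i] /=; rewrite raddfD hb hcs //.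
by rewrite cs0 addrC subrK.
Qed.
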